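(* Let $T$ be a forest without isolated vertices of order at least $3$, and let $P_T$ be the set of pendant vertices of $T$ that are adjacent to a vertex of degree at least $2$. Then there is a $\delta$-sequence $\{\mathcal T_i\}_{i=1}^s$ of $T$ such that $\tilde z_i(T)\ge 0$ for all $2\le i\le s$ and $\tilde z_s(T)\ge |P_T|-|N_T(P_T)|$.
   Context: $N_T(S)$ denotes the set of all neighbours of vertices of $S$ in $T$; a pendant vertex is a vertex of degree 1. $G+H$ denotes disjoint union, $mK_1$ the edgeless graph on $m$ vertices, $K_r$ the complete graph. $\delta$-sequence: Let $G$ have order $p$ with $1\le\delta(G)\le p-2$. Set $\mathcal G_1=G_1=G$, $m_1=0$. For each $i$, write $\mathcal G_i=m_iK_1+G_i$, where $m_i\ge0$ is the number of isolated vertices of $\mathcal G_i$ and $G_i$ has no isolated vertices; put $\delta_i=\delta(G_i)$. If $\mathcal G_i$ is neither of the form $mK_1$ ($m\ge1$) nor $mK_1+K_r$ ($m\ge0$, $r\ge2$), choose a vertex $u_i$ of $G_i$ with $\deg_{G_i}(u_i)=\delta_i$ and let $\mathcal G_{i+1}$ be obtained from $G_i$ by deleting $u_i$ together with all its neighbours in $G_i$. Stop at the first index $s$ ($s\ge2$) for which $\mathcal G_s$ is $m_sK_1$ with $m_s\ge1$ (then set $\delta_s=0$) or $m_sK_1+K_r$ with $m_s\ge0$, $r\ge2$ (then $\delta_s=r-1$). The resulting $\{\mathcal G_i\}_{i=1}^s$ is a $\delta$-sequence of $G$. Define $\tilde y_j(G)=m_j+1-\delta_j$ for $1\le j\le s$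 and $\tilde z_i(G)=\sum_{j=2}^i\tilde y_j(G)$. *)

(* Defs.v *)
(* A finite simple graph is a symmetric irreflexive relation
   e : rel T on a finType T; subgraphs considered here are induced subgraphs,
   represented by their vertex sets S : {set T}. *)
From mathcomp Require Import all_boot all_order all_algebra.
Set Implicit Arguments. Unset Strict Implicit. Unset Printing Implicit Defensive.

Section Graphs.
Variables (T : finType) (e : rel T).

Definition simple_graph : Prop := symmetric e /\ irreflexive e.

Definition forest : Prop :=
  forall c : seq T, uniq c -> 2 < size c -> ~~ cycle e c.

Definition deg (S : {set T}) (v : T) : nat := #|[set w in S | e v w]|.

(* vertices of G[S] that are not isolated: V(G_i) when G[S] = m K_1 + G_i *)
Definition core (S : {set T}) : {set T} := [set v in S | 0 < deg S v].

Definition nisol (S : {set T}) : nat := #|S :\: core S|.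

Definition mindeg (C : {set T}) : nat :=
  if C == set0 then 0 else \big[minn/#|T|]_(v in C) deg C v.

(* delta_i: the minimum degree of G_i (= 0 for m K_1, = r-1 for m K_1 + K_r) *)
Definition delta_of (S : {set T}) : nat := mindeg (core S).

(* G[S] is of the form m K_1 (m >= 1) or m K_1 + K_r (m >= 0, r >= 2) *)
Definition terminal (S : {set T}) : bool :=
  ((S != set0) && (core S == set0)) ||
  ((1 < #|core S|) &&
   [forall v in core S, forall w in core S, (v != w) ==> e v w]).

Definition cnbhd (C : {set T}) (u : T) : {set T} := u |: [set w in C | e u w].

(* S = [:: S_1; ...; S_s] : the vertex sets of the delta-sequence G_1,...,G_s *)
Definition Sq (S : seq {set T}) (i : nat) : {set T} := nth set0 S i.-1.

Definition delta_sequence (S : seq {set T}) : Prop :=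
  [/\ 2 <= size S,
      Sq S 1 = [set: T],
      terminal (Sq S (size S)) &
      forall i, 1 <= i -> i < size S ->
        ~~ terminal (Sq S i) /\
        exists u, [/\ u \in core (Sq S i),
                      deg (core (Sq S i)) u = delta_of (Sq S i) &
                      Sq S i.+1 = core (Sq S i) :\: cnbhd (core (Sq S i)) u]].

Definition ytilde (S : seq {set T}) (j : nat) : int :=
  (nisol (Sq S j))%:Z + 1 - (delta_of (Sq S j))%:Z.

Definition ztilde (S : seq {set T}) (i : nat) : int :=
  \sum_(2 <= j < i.+1) ytilde S j.

Definition PT : {set T} :=
  [set v | (deg [set: T] v == 1) && [exists w, e v w && (2 <= deg [set: T] w)]].

Definition NT (A : {set T}) : {set T} := [set w | [exists v in A, e v w]].

End Graphs.

(* Main.v *)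
Require Import Defs.
From mathcomp Require Import all_boot all_order all_algebra zify.
Set Implicit Arguments. Unset Strict Implicit. Unset Printing Implicit Defensive.
Import Order.TTheory GRing.Theory Num.Theory.

Section G.
Variables (T : finType) (e : rel T).
Hypothesis esym : symmetric e.
Hypothesis eirr : irreflexive e.
Hypothesis efor : forest e.

Lemma cyc_of x y p1 z p2 : uniq (x :: y :: p1 ++ z :: p2) ->
  path e x (y :: p1 ++ z :: p2) -> e x z -> False.
Proof.
have E : y :: p1 ++ z :: p2 = rcons (y :: p1) z ++ p2 by rewrite cat_rcons.
rewrite E -cat_cons cat_uniq cat_path => /and3P[u _ _] /andP[pa _] exz.
apply: (negP (efor u _)); first by rewrite /= size_rcons.
by rewrite /= rcons_path last_rcons (esym z x) exz andbT.
Qed.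

Lemma extend (C : {set T}) :
  (forall v, v \in C -> 2 <= deg e C v) ->
  forall (x : T) (p : seq T), uniq (x :: p) -> path e x p ->
    all (fun v => v \in C) (x :: p) ->
  exists z, [&& uniq (z :: x :: p), path e z (x :: p) & all (fun v => v \in C) (z :: x :: p)].
Proof.
move=> hC x p up pp ap.
have xC : x \in C by move: ap => /andP[].
have hx := hC x xC; rewrite /deg in hx.
case: p up pp ap => [|y p'] up pp ap.
  have /set0Pn[z] : [set w in C | e x w] != set0 by rewrite -card_gt0; apply: leq_trans hx.
  rewrite inE => /andP[zC exz]; exists z.
  have zx : z != x by apply/eqP => zx; rewrite zx eirr in exz.
  by rewrite /= inE zx (esym z x) exz zC xC.
have : 0 < #|[set w in C | e x w] :\ y|.
  move: hx; rewrite (cardsD1 y); case: (y \in _) => /=; lia.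
rewrite card_gt0 => /set0Pn[z]; rewrite !inE => /and3P[zy zC exz].
have zx : z != x by apply/eqP => zx; rewrite zx eirr in exz.
case zin : (z \in p').
  case/splitPr: zin up pp => p1 p2 up pp.
  by case: (cyc_of up pp exz).
exists z; rewrite /= !inE (negbTE zx) (negbTE zy) zin /= (esym z x) exz zC /=.
by move: up pp ap => /= -> -> ->.
Qed.

Lemma grow (C : {set T}) :
  (forall v, v \in C -> 2 <= deg e C v) ->
  forall k (x : T) (p : seq T), uniq (x :: p) -> path e x p ->
    all (fun v => v \in C) (x :: p) -> #|T| - size (x :: p) <= k -> False.
Proof.
move=> hC; elim=> [|k IH] x p up pp ap hk;
  have [z /and3P[uz pz az]] := extend hC up pp ap.
- have := max_card (mem (z :: x :: p)); rewrite (card_uniqP uz) /=.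
  move: hk; rewrite /=; lia.
apply: (IH z (x :: p) uz pz az); move: hk => /=.
have := max_card (mem (z :: x :: p)); rewrite (card_uniqP uz) /=; lia.
Qed.

Lemma leaf (C : {set T}) : C != set0 -> exists2 v, v \in C & deg e C v <= 1.
Proof.
move=> /set0Pn[x xC].
case: (boolP [forall v in C, 2 <= deg e C v]) => [/forall_inP h|].
  by case: (grow h (k := #|T|) (x := x) (p := [::])) => /=; rewrite ?xC ?subnn ?leq_subr.
rewrite negb_forall_in => /exists_inP[v vC]; rewrite -ltnNge ltnS => ?.
by exists v.
Qed.

Lemma bigmin_le (I : eqType) (s : seq I) (F : I -> nat) a x :
  x \in s -> \big[minn/a]_(i <- s) F i <= F x.
Proof.
elim: s => [//|y s IH]; rewrite inE big_cons => /orP[/eqP<-|xs].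
  exact: geq_minl.
exact: leq_trans (geq_minr _ _) (IH xs).
Qed.

Lemma mindeg_le (C : {set T}) v : v \in C -> mindeg e C <= deg e C v.
Proof.
move=> vC; rewrite /mindeg; case: eqP => [C0|_].
  by rewrite C0 inE in vC.
by rewrite -big_filter; apply: bigmin_le; rewrite mem_filter vC mem_index_enum.
Qed.

Lemma mindeg_ge1 (C : {set T}) : C != set0 -> (forall v, v \in C -> 1 <= deg e C v) ->
  1 <= mindeg e C.
Proof.
move=> /negPf C0 h; rewrite /mindeg C0.
apply: (big_ind (fun n => 1 <= n)) => //.
- by move: C0 => /negbT/set0Pn[v _]; apply/card_gt0P; exists v.
- by move=> a b ha hb; rewrite leq_min ha hb.
Qed.

Lemma core_sub (X : {set T}) : core e X \subset X.
Proof. by apply/subsetP => v; rewrite inE => /andP[]. Qed.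

Lemma deg_core (X : {set T}) v : v \in X -> deg e (core e X) v = deg e X v.
Proof.
move=> vX; rewrite /deg; apply: eq_card => w; rewrite !inE.
case wX: (w \in X) => //=; case evw: (e v w) => /=; last by case: (_ < _).
apply/andP; split => //; rewrite /deg card_gt0; apply/set0Pn; exists v; by rewrite inE vX esym.
Qed.

Lemma delta_one (X : {set T}) : core e X != set0 -> delta_of e X = 1.
Proof.
move=> C0; apply/eqP; rewrite eqn_leq; apply/andP; split.
  have [v vC hv] := leaf C0; exact: leq_trans (mindeg_le vC) hv.
apply: mindeg_ge1 => // v vC.
have vX : v \in X by move: vC; rewrite inE => /andP[].
by rewrite deg_core //; move: vC; rewrite inE => /andP[].
Qed.

Lemma delta_le1 (X : {set T}) : delta_of e X <= 1.
Proof.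
case: (eqVneq (core e X) set0) => [C0|C0]; last by rewrite delta_one.
by rewrite /delta_of C0 /mindeg eqxx.
Qed.

Local Notation P := (PT e).
Local Notation NP := (NT e (PT e)).

Lemma P_uniq p a b : p \in P -> e p a -> e p b -> a = b.
Proof.
rewrite inE => /andP[/cards1P[z hz] _] ea eb.
have : a \in [set w in [set: T] | e p w] by rewrite inE inE ea.
have : b \in [set w in [set: T] | e p w] by rewrite inE inE eb.
by rewrite hz !inE => /eqP-> /eqP->.
Qed.

Lemma P_NP p a : p \in P -> e p a -> a \in NP.
Proof. by move=> pP ea; rewrite inE; apply/exists_inP; exists p. Qed.

Lemma NP_P a : a \in NP -> a \notin P.
Proof.
rewrite inE => /exists_inP[p pP epa].
move: (pP); rewrite inE => /andP[_ /existsP[w /andP[epw hw]]].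
rewrite (P_uniq pP epa epw) inE negb_and; apply/orP; left.
by rewrite neq_ltn hw orbT.
Qed.

Definition ystep (X : {set T}) : int := (nisol e X)%:Z + 1 - (delta_of e X)%:Z.
Definition Psi (X : {set T}) : int := (#|P :&: X|)%:Z - (#|NP :&: X|)%:Z.

Lemma ystep_ge0 (X : {set T}) : (0 <= ystep X)%R.
Proof. have := delta_le1 X; rewrite /ystep; lia. Qed.

Lemma bound_a (X : {set T}) : #|P :&: X| <= nisol e X + #|P :&: core e X|.
Proof.
rewrite -(cardsID (core e X) (P :&: X)) addnC leq_add //.
  by apply: subset_leq_card; apply/subsetP => v; rewrite !(in_setD, in_setI) => /and3P[-> _ ->].
by apply: subset_leq_card; apply/subsetP => v; rewrite !(in_setD, in_setI) => /andP[/andP[-> _] ->].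
Qed.

Lemma terminal_bound (X : {set T}) : terminal e X -> (Psi X <= ystep X)%R.
Proof.
have ha := bound_a X.
rewrite /terminal /Psi /ystep => /orP[/andP[_ /eqP C0]|/andP[hc /forall_inP hall]].
  move: ha; rewrite /delta_of /nisol C0 /mindeg eqxx setD0 setI0 cards0.
  lia.
have C0 : core e X != set0 by rewrite -card_gt0; apply: ltnW.
rewrite delta_one //.
suff : #|P :&: core e X| <= #|NP :&: X| by lia.
case: (eqVneq (P :&: core e X) set0) => [->|/set0Pn[p]]; first by rewrite cards0.
rewrite inE => /andP[pP pC].
have : 0 < #|core e X :\ p| by move: hc; rewrite (cardsD1 p) pC; lia.
rewrite card_gt0 => /set0Pn[q]; rewrite in_setD1 => /andP[qp qC].
have epq : e p q.
  by move: (hall p pC) => /forall_inP/(_ q qC)/implyP; apply; rewrite eq_sym.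
have qNP := P_NP pP epq.
apply: (@leq_trans 1).
  rewrite -(cards1 p); apply: subset_leq_card; apply/subsetP => r.
  rewrite in_setI in_set1 => /andP[rP rC]; apply/negPn/negP => rp.
  have epr : e p r.
    by move: (hall p pC) => /forall_inP/(_ r rC)/implyP; apply; rewrite eq_sym.
  by move: rP; rewrite -(P_uniq pP epq epr) (negPf (NP_P qNP)).
rewrite card_gt0; apply/set0Pn; exists q; rewrite in_setI qNP /=.
by move: qC; rewrite inE => /andP[].
Qed.

Lemma N_sub (C : {set T}) u : u \in C -> cnbhd e C u \subset C.
Proof.
move=> uC; apply/subsetP => v; rewrite /cnbhd in_setU1 => /orP[/eqP->//|].
by rewrite inE => /andP[].
Qed.

Lemma hd_bound (C : {set T}) u : u \in C -> deg e C u = 1 ->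
  #|P :&: cnbhd e C u| <= #|NP :&: cnbhd e C u|.
Proof.
move=> uC /eqP/cards1P[w0 hw0].
have : w0 \in [set w in C | e u w] by rewrite hw0 set11.
rewrite inE => /andP[w0C euw].
have -> : cnbhd e C u = [set u; w0] by rewrite /cnbhd hw0.
case: (boolP (u \in P)) => uP.
  have w0NP := P_NP uP euw.
  apply: (@leq_trans 1).
    rewrite -(cards1 u); apply: subset_leq_card; apply/subsetP => v.
    rewrite in_setI !in_set2 => /andP[vP /orP[/eqP->|/eqP vw]]; first by rewrite set11.
    by move: vP; rewrite vw (negPf (NP_P w0NP)).
  rewrite card_gt0; apply/set0Pn; exists w0; by rewrite in_setI w0NP set22.
case: (boolP (w0 \in P)) => w0P.
  have uNP : u \in NP by apply: (P_NP w0P); rewrite esym.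
  apply: (@leq_trans 1).
    rewrite -(cards1 w0); apply: subset_leq_card; apply/subsetP => v.
    rewrite in_setI !in_set2 => /andP[vP /orP[/eqP vu|/eqP->]]; last by rewrite set11.
    by move: vP; rewrite vu (negPf uP).
  rewrite card_gt0; apply/set0Pn; exists u; by rewrite in_setI uNP set21.
rewrite (_ : P :&: _ = set0) ?cards0 //; apply/setP => v.
rewrite in_setI !in_set2 in_set0; apply/negP => /andP[vP /orP[] /eqP vE];
  by move: vP; rewrite vE ?(negPf uP) ?(negPf w0P).
Qed.

Lemma step_bound (X : {set T}) u : u \in core e X -> deg e (core e X) u = 1 ->
  (Psi X <= ystep X + Psi (core e X :\: cnbhd e (core e X) u))%R.
Proof.
move=> uC du.
have C0 : core e X != set0 by apply/set0Pn; exists u.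
have ha := bound_a X.
have NC := N_sub uC.
have CX := core_sub X.
have hb : #|P :&: core e X| <=
   #|P :&: (core e X :\: cnbhd e (core e X) u)| + #|P :&: cnbhd e (core e X) u|.
  rewrite -(cardsID (cnbhd e (core e X) u) (P :&: core e X)) addnC leq_add //.
    apply: subset_leq_card; apply/subsetP => v.
    by rewrite !(in_setD, in_setI) => /andP[-> /andP[-> ->]].
  apply: subset_leq_card; apply/subsetP => v.
  by rewrite !(in_setD, in_setI) => /andP[/andP[-> _] ->].
have hc : #|NP :&: (core e X :\: cnbhd e (core e X) u)| +
    #|NP :&: cnbhd e (core e X) u| <= #|NP :&: X|.
  rewrite -(cardsID (cnbhd e (core e X) u) (NP :&: X)) addnC leq_add //.
    apply: subset_leq_card; apply/subsetP => v.
    rewrite !(in_setD, in_setI) => /andP[-> vN]; rewrite vN andbT /=.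
    exact: (subsetP CX _ (subsetP NC _ vN)).
  apply: subset_leq_card; apply/subsetP => v.
  rewrite !(in_setD, in_setI) => /andP[-> /andP[-> vC]] /=.
  exact: (subsetP CX).
have hd := hd_bound uC du.
rewrite /Psi /ystep delta_one //; lia.
Qed.

Definition tailok (L : seq {set T}) :=
  [/\ 0 < size L, terminal e (nth set0 L (size L).-1) &
   forall i, i.+1 < size L -> ~~ terminal e (nth set0 L i) /\
     exists u, [/\ u \in core e (nth set0 L i),
       deg e (core e (nth set0 L i)) u = delta_of e (nth set0 L i) &
       nth set0 L i.+1 = core e (nth set0 L i) :\: cnbhd e (core e (nth set0 L i)) u]].

Lemma build n : forall X : {set T}, #|X| <= n -> X != set0 ->
  exists L, tailok (X :: L) /\ (Psi X <= \sum_(Y <- X :: L) ystep Y)%R.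
Proof.
elim: n => [|n IH] X hX X0.
  by move: X0; rewrite -card_gt0; move: hX; case: #|X|.
case: (boolP (terminal e X)) => tX.
  exists [::]; split; first by split => // [[|i]].
  by rewrite big_cons big_nil addr0 terminal_bound.
have C0 : core e X != set0.
  apply/negP => /eqP C0; move: tX; by rewrite /terminal X0 C0 eqxx.
have [u uC hu] := leaf C0.
have uX : u \in X by move: uC; rewrite inE => /andP[].
have du : deg e (core e X) u = 1.
  apply/eqP; rewrite eqn_leq hu /= deg_core //; by move: uC; rewrite inE => /andP[].
pose X' := core e X :\: cnbhd e (core e X) u.
have NC := N_sub uC.
have CX := core_sub X.
have hX' : #|X'| <= n.
  have : X' \subset X :\ u.
    apply/subsetP => v; rewrite /X' in_setD in_setD1 => /andP[vN vC].
    rewrite (subsetP CX _ vC) andbT; apply: contraNN vN => /eqP->.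
    by rewrite /cnbhd setU11.
  move/subset_leq_card; move: hX; rewrite (cardsD1 u X) uX; lia.
have X'0 : X' != set0.
  apply/negP => /eqP X'0; move/negP: tX; apply.
  have /cards1P[w0 hw0] : #|[set w in core e X | e u w]| == 1 by rewrite -/(deg e _ _) du.
  have : w0 \in [set w in core e X | e u w] by rewrite hw0 set11.
  rewrite inE => /andP[w0C euw].
  have w0u : w0 != u by apply/eqP => E; rewrite E eirr in euw.
  have sub : core e X \subset [set u; w0].
    apply/subsetP => v vC; apply/negPn/negP => vN.
    have : v \in X' by rewrite /X' in_setD vC andbT /cnbhd hw0.
    by rewrite X'0 inE.
  apply/orP; right; apply/andP; split.
    by rewrite (cardsD1 u) uC (cardsD1 w0) in_setD1 w0u w0C.
  apply/forall_inP => v vC; apply/forall_inP => w wC; apply/implyP => vw.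
  move: vw (subsetP sub _ vC) (subsetP sub _ wC); rewrite !in_set2.
  move=> vw /orP[] /eqP vE /orP[] /eqP wE; move: vw; rewrite vE wE ?eqxx // => _.
  by rewrite esym.
have [L' [[_ tl hl] hs]] := IH X' hX' X'0.
exists (X' :: L'); split.
  split => //.
  case=> [_|i hi]; last exact: hl.
  split => //; exists u; split => //.
  by rewrite delta_one.
rewrite big_cons; apply: le_trans (step_bound uC du) _.
by rewrite lerD2l.
Qed.

Lemma core_setT : (forall v, exists w, e v w) -> core e [set: T] = [set: T].
Proof.
move=> h; apply/setP => v; rewrite inE in_setT /= /deg card_gt0.
have [w evw] := h v; apply/set0Pn; exists w; by rewrite inE in_setT.
Qed.

Lemma setT_nonterm : (forall v, exists w, e v w) -> (3 <= #|T|) ->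
  ~~ terminal e [set: T].
Proof.
move=> h h3; rewrite /terminal core_setT // negb_or; apply/andP; split.
  by rewrite negb_and negbK orbN.
rewrite negb_and; apply/orP; right; apply/negP => /forall_inP hall.
have T0 : [set: T] != set0 by rewrite -card_gt0 cardsT; lia.
have [v _ hv] := leaf T0.
have : #|[set: T] :\ v| <= deg e [set: T] v.
  apply: subset_leq_card; apply/subsetP => w; rewrite in_setD1 inE in_setT andbT => wv.
  by move: (hall v (in_setT v)) => /forall_inP/(_ w (in_setT w))/implyP; apply; rewrite eq_sym.
move: hv h3; rewrite -cardsT (cardsD1 v [set: T]) in_setT; lia.
Qed.

Lemma ystep_setT : (forall v, exists w, e v w) -> (3 <= #|T|) ->
  ystep [set: T] = 0%R.
Proof.
move=> h h3; rewrite /ystep delta_one; last first.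
  by rewrite core_setT // -card_gt0 cardsT; lia.
by rewrite /nisol core_setT // setDv cards0.
Qed.

End G.
Lemma sum_shift (T : finType) (e : rel T) (X0 : {set T}) (L : seq {set T}) :
  ztilde e (X0 :: L) (size (X0 :: L)) = (\sum_(Y <- L) ystep e Y)%R.
Proof.
rewrite /ztilde /= big_add1 /= big_add1 /= (big_nth set0) /=.
by apply: eq_bigr.
Qed.

Local Open Scope ring_scope.

Theorem mainTheorem6 (T : finType) (e : rel T) :
  simple_graph e -> forest e ->
  (forall v : T, exists w, e v w) ->
  (3 <= #|T|)%N ->
  exists S : seq {set T},
    delta_sequence e S /\
    (forall i, (2 <= i <= size S)%N -> 0 <= ztilde e S i) /\
    ztilde e S (size S) >= (#|PT e|)%:Z - (#|NT e (PT e)|)%:Z.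
Proof.
move=> [esym eirr] efor h h3.
have T0 : [set: T] != set0 by rewrite -card_gt0 cardsT; lia.
have [L [[_ tl hl] hs]] := build esym eirr efor (max_card (mem [set: T])) T0.
have nt := setT_nonterm esym eirr efor h h3.
have L0 : L != [::] by case: L tl {hl hs} => //= tl; rewrite (negPf nt) in tl.
exists ([set: T] :: L); split; [|split].
- split => //.
  + by case: L L0 {tl hl hs}.
  + move=> [|j] // _ hj; exact: hl.
- move=> i _; rewrite /ztilde; apply: sumr_ge0 => j _.
  exact: (ystep_ge0 esym eirr efor).
- rewrite sum_shift; move: hs; rewrite big_cons (ystep_setT esym eirr efor h h3) add0r.
  by rewrite /Psi !setIT.
Qed.
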